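(* Let $E$ be a group and $B$ a subgroup of finite index $n$, with right transversal $\{t_1,\dots,t_n\}$; for $x\in E$ write $t_{ix}$ for the transversal element with $Bt_ix=Bt_{ix}$. Let $\pi:B\to B/V(B)$ be the natural map, $b\mapsto\bar b$. Fix $y_1,\dots,y_r\in B$ and define $\tau:E\to B/V(B)$ by $$x\tau=\prod_{i=1}^n\big[w(\bar y_1,\dots,\bar y_r),(t_ixt_{ix}^{-1})\pi\big].$$ Then $\tau$ is a well-defined homomorphism which does not depend on the choice of the transversal. Moreover, if $x\in V^*(E)$ then $x\tau=\overline{[w(y_1,\dots,y_r),x^n]}$.
   Context: Commutators: $[a,b]=a^{-1}b^{-1}ab$, $[a_1,\dots,a_n]=[[a_1,\dots,a_{n-1}],a_n]$. Outer commutator words are defined inductively: each variable $x_i$ is one of weight $1$; if $u(x_1,\dots,x_s)$ and $v(x_{s+1},\dots,x_{s+t})$ are outer commutator words in disjoint variables, then $[u,v]$ is one of weight $s+t$. Let $w=w(x_1,\dots,x_r)$ be an outer commutator word and let $\mathcal V$ be the variety defined by the single law $[w(x_1,\dots,x_r),x_{r+1},x_{r+2}]$ (the centre-by-centre-by-$w$ variety). For a group $G$, $V(G)$ is the verbal subgroup generated by all values $[w(g_1,\dots,g_r),g_{r+1},g_{r+2}]$, and the marginal subgroup $V^*(G)$ is the set of $a\in G$ such that replacing any one argument $g_i$ by $g_ia$ does not change the value $[w(g_1,\dots,g_r),g_{r+1},g_{r+2}]$, for all $g_j\in G$. *)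

(* Defs.v *)
(* E is an arbitrary (possibly infinite) group, so we use an
   explicit record of group axioms rather than MathComp's finite groups. *)
From Stdlib Require Import List Arith.
Set Implicit Arguments.

Record Grp := {
  carrier :> Type;
  gmul : carrier -> carrier -> carrier;
  ginv : carrier -> carrier;
  gone : carrier;
  gmulA : forall a b c, gmul a (gmul b c) = gmul (gmul a b) c;
  gmul1l : forall a, gmul gone a = a;
  gmul1r : forall a, gmul a gone = a;
  gmulVl : forall a, gmul (ginv a) a = gone;
  gmulVr : forall a, gmul a (ginv a) = gone
}.
Arguments gmul {g}. Arguments ginv {g}. Arguments gone {g}.

Definition comm {G : Grp} (a b : G) : G :=
  gmul (gmul (gmul (ginv a) (ginv b)) a) b.

Fixpoint gpow {G : Grp} (x : G) (n : nat) : G :=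
  match n with O => gone | S m => gmul x (gpow x m) end.

Definition gprod {G : Grp} (n : nat) (f : nat -> G) : G :=
  fold_right (fun i acc => gmul (f i) acc) gone (seq 0 n).

(* Outer commutator words: variables are numbered consecutively left to right;
   a leaf is a single variable, [u,v] uses disjoint consecutive variables. *)
Inductive ocw := OVar | OComm (u v : ocw).

Fixpoint weight (w : ocw) : nat :=
  match w with OVar => 1 | OComm u v => weight u + weight v end.

Fixpoint ocw_eval {G : Grp} (w : ocw) (k : nat) (g : nat -> G) : G :=
  match w with
  | OVar => g k
  | OComm u v => comm (ocw_eval u k g) (ocw_eval v (k + weight u) g)
  end.

Definition wval {G : Grp} (w : ocw) (g : nat -> G) : G := ocw_eval w 0 g.

Definition vlaw {G : Grp} (w : ocw) (g : nat -> G) : G :=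
  comm (comm (wval w g) (g (weight w))) (g (S (weight w))).

Definition is_subgroup {G : Grp} (B : G -> Prop) : Prop :=
  B gone /\ (forall a b, B a -> B b -> B (gmul a b)) /\ (forall a, B a -> B (ginv a)).

Inductive gen_sub {G : Grp} (S : G -> Prop) : G -> Prop :=
  | gen_base : forall a, S a -> gen_sub S a
  | gen_one : gen_sub S gone
  | gen_mul : forall a b, gen_sub S a -> gen_sub S b -> gen_sub S (gmul a b)
  | gen_inv : forall a, gen_sub S a -> gen_sub S (ginv a).

Definition verbal {G : Grp} (w : ocw) (B : G -> Prop) : G -> Prop :=
  gen_sub (fun z => exists g : nat -> G,
             (forall j, j < weight w + 2 -> B (g j)) /\ z = vlaw w g).

Definition upd {G : Grp} (g : nat -> G) (j : nat) (a : G) : nat -> G :=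
  fun k => if Nat.eqb k j then gmul (g j) a else g k.

Definition marginal {G : Grp} (w : ocw) (a : G) : Prop :=
  forall (g : nat -> G) j, j < weight w + 2 -> vlaw w (upd g j a) = vlaw w g.

(* equality of images in B/V(B): b1 V(B) = b2 V(B) *)
Definition congV {G : Grp} (w : ocw) (B : G -> Prop) (b1 b2 : G) : Prop :=
  verbal w B (gmul b1 (ginv b2)).

Definition right_transversal {G : Grp} (B : G -> Prop) (n : nat) (t : nat -> G) : Prop :=
  (forall x, exists i, i < n /\ B (gmul x (ginv (t i)))) /\
  (forall x i j, i < n -> j < n -> B (gmul x (ginv (t i))) -> B (gmul x (ginv (t j))) -> i = j).

(* sigma i x is the index "ix": B t_i x = B t_{ix} *)
Definition coset_action {G : Grp} (B : G -> Prop) (n : nat) (t : nat -> G)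
  (sigma : nat -> G -> nat) : Prop :=
  forall i x, i < n -> sigma i x < n /\ B (gmul (gmul (t i) x) (ginv (t (sigma i x)))).

(* representative in B of x tau = prod_i [w(y), t_i x t_{ix}^-1] *)
Definition tau {G : Grp} (w : ocw) (y : nat -> G) (n : nat) (t : nat -> G)
  (sigma : nat -> G -> nat) (x : G) : G :=
  gprod n (fun i => comm (wval w y) (gmul (gmul (t i) x) (ginv (t (sigma i x))))).

(* Main.v *)
Require Import Defs.
From Stdlib Require Import Arith List Lia Permutation Classical.
Import ListNotations.

Lemma mulA' (G : Grp) (a b c : G) : gmul (gmul a b) c = gmul a (gmul b c).
Proof. now rewrite gmulA. Qed.
Lemma mulKl (G : Grp) (a b : G) : gmul (ginv a) (gmul a b) = b.
Proof. now rewrite gmulA, gmulVl, gmul1l. Qed.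
Lemma mulKr (G : Grp) (a b : G) : gmul a (gmul (ginv a) b) = b.
Proof. now rewrite gmulA, gmulVr, gmul1l. Qed.
Lemma inv_uniq (G : Grp) (a b : G) : gmul a b = gone -> ginv a = b.
Proof. intro H. rewrite <- (gmul1r _ (ginv a)), <- H, gmulA, gmulVl, gmul1l. reflexivity. Qed.
Lemma invM (G : Grp) (a b : G) : ginv (gmul a b) = gmul (ginv b) (ginv a).
Proof. apply inv_uniq. rewrite mulA', mulKr. apply gmulVr. Qed.
Lemma invK (G : Grp) (a : G) : ginv (ginv a) = a.
Proof. apply inv_uniq. apply gmulVl. Qed.
Lemma inv1 (G : Grp) : ginv (@gone G) = gone.
Proof. apply inv_uniq. apply gmul1l. Qed.

Global Hint Rewrite mulA' gmul1l gmul1r gmulVl gmulVr mulKl mulKr invM invK inv1 : grp.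
Ltac gsimpl := unfold comm in *; autorewrite with grp in *.
Ltac gsolve := unfold comm; autorewrite with grp; reflexivity.

Lemma mul_cancel_r (G : Grp) (a b c : G) : gmul a c = gmul b c -> a = b.
Proof. intro H. rewrite <- (gmul1r _ a), <- (gmul1r _ b), <- (gmulVr _ c), !gmulA, H. reflexivity. Qed.
Lemma mul_cancel_l (G : Grp) (a b c : G) : gmul c a = gmul c b -> a = b.
Proof. intro H. rewrite <- (mulKl _ c a), H. apply mulKl. Qed.

Lemma comm_1 (G : Grp) (a b : G) : comm a b = gone -> gmul a b = gmul b a.
Proof. unfold comm; intro H. apply (mul_cancel_l _ _ _ (gmul (ginv a) (ginv b))).
  gsimpl. exact H. Qed.
Lemma comm_of (G : Grp) (a b : G) : gmul a b = gmul b a -> comm a b = gone.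
Proof. intro H. unfold comm. rewrite !mulA', H. gsimpl. reflexivity. Qed.

Lemma comm_mul_r (G : Grp) (a u v : G) :
  comm a (gmul u v) = gmul (comm a v) (gmul (gmul (ginv v) (comm a u)) v).
Proof. gsolve. Qed.
Lemma comm_mul_l (G : Grp) (a b d : G) :
  comm (gmul a b) d = gmul (gmul (gmul (ginv b) (comm a d)) b) (comm b d).
Proof. gsolve. Qed.
Lemma comm_conj (G : Grp) (a b x : G) :
  comm (gmul (gmul (ginv x) a) x) (gmul (gmul (ginv x) b) x) = gmul (gmul (ginv x) (comm a b)) x.
Proof. gsolve. Qed.

Lemma commute_pow (G : Grp) (a x : G) : gmul a x = gmul x a ->
  forall m, gmul a (gpow x m) = gmul (gpow x m) a.
Proof. intros H m; induction m; simpl. gsimpl; reflexivity.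
  rewrite gmulA, H, <- gmulA, IHm, gmulA. reflexivity. Qed.
Lemma ocw_eval_ext (G : Grp) (w : ocw) : forall k (g g' : nat -> G),
  (forall j, k <= j -> j < k + weight w -> g j = g' j) -> ocw_eval w k g = ocw_eval w k g'.
Proof. induction w as [|u IHu v IHv]; intros k g g' H; simpl in *.
  - apply H; lia.
  - rewrite (IHu k g g'), (IHv (k + weight u) g g'); auto; intros; apply H; lia. Qed.

Lemma subgroup_comm (G : Grp) (B : G -> Prop) : is_subgroup B ->
  forall a b, B a -> B b -> B (comm a b).
Proof. intros [H1 [HM HI]] a b Ha Hb. unfold comm. auto. Qed.

Lemma ocw_eval_B (G : Grp) (B : G -> Prop) (HB : is_subgroup B) (w : ocw) : forall k (g : nat -> G),
  (forall j, k <= j -> j < k + weight w -> B (g j)) -> B (ocw_eval w k g).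
Proof. induction w as [|u IHu v IHv]; intros k g H; simpl in *.
  - apply H; lia.
  - apply subgroup_comm; auto; [apply IHu | apply IHv]; intros; apply H; lia. Qed.

Lemma ocw_eval_conj (G : Grp) (x : G) (w : ocw) : forall k (g : nat -> G),
  ocw_eval w k (fun j => gmul (gmul (ginv x) (g j)) x) = gmul (gmul (ginv x) (ocw_eval w k g)) x.
Proof. induction w as [|u IHu v IHv]; intros k g; simpl; auto.
  rewrite IHu, IHv. apply comm_conj. Qed.

Lemma verbal_gen (G : Grp) (w : ocw) (B : G -> Prop) :
  (verbal w B gone) /\ (forall a b, verbal w B a -> verbal w B b -> verbal w B (gmul a b))
  /\ (forall a, verbal w B a -> verbal w B (ginv a)).
Proof. split; [|split]; intros; unfold verbal in *; now constructor. Qed.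

Lemma verbal_sub (G : Grp) (w : ocw) (B : G -> Prop) (HB : is_subgroup B) :
  forall z, verbal w B z -> B z.
Proof. pose proof HB as [H1 [HM HI]]. intros z Hz; induction Hz; auto.
  destruct H as [g [Hg ->]]. unfold vlaw, wval. repeat apply subgroup_comm; auto.
  apply ocw_eval_B; auto. intros; apply Hg; lia. apply Hg; lia. apply Hg; lia. Qed.

Lemma verbal_conj (G : Grp) (w : ocw) (B : G -> Prop) (HB : is_subgroup B) :
  forall x z, B x -> verbal w B z -> verbal w B (gmul (gmul (ginv x) z) x).
Proof. pose proof HB as [H1 [HM HI]]. intros x z Hx Hz; induction Hz.
  - destruct H as [g [Hg ->]]. apply gen_base.
    exists (fun j => gmul (gmul (ginv x) (g j)) x). split.
    + intros j Hj; auto.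
    + unfold vlaw, wval. rewrite ocw_eval_conj, !comm_conj. reflexivity.
  - replace (gmul (gmul (ginv x) gone) x) with (@gone G) by (gsimpl; reflexivity). apply gen_one.
  - replace (gmul (gmul (ginv x) (gmul a b)) x) with
      (gmul (gmul (gmul (ginv x) a) x) (gmul (gmul (ginv x) b) x)) by gsolve. now apply gen_mul.
  - replace (gmul (gmul (ginv x) (ginv a)) x) with (ginv (gmul (gmul (ginv x) a) x)) by gsolve.
    now apply gen_inv.
Qed.

Lemma verbal_conj' (G : Grp) (w : ocw) (B : G -> Prop) (HB : is_subgroup B) :
  forall x z, B x -> verbal w B z -> verbal w B (gmul (gmul x z) (ginv x)).
Proof. intros x z Hx Hz. pose proof HB as [H1 [HM HI]].
  pose proof (verbal_conj _ w B HB (ginv x) z (HI _ Hx) Hz). now rewrite invK in H. Qed.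

Lemma vlaw_phi (G : Grp) (w : ocw) (B : G -> Prop) (y : nat -> G) :
  (forall k, k < weight w -> B (y k)) -> forall b d, B b -> B d ->
  verbal w B (comm (comm (wval w y) b) d).
Proof. intros Hy b d Hb Hd. apply gen_base.
  exists (fun k => if k <? weight w then y k else if k =? weight w then b else d).
  split.
  - intros j Hj. destruct (j <? weight w) eqn:E1. apply Hy. apply Nat.ltb_lt; auto.
    destruct (j =? weight w); auto.
  - unfold vlaw, wval. rewrite Nat.ltb_irrefl, Nat.eqb_refl.
    replace (S (weight w) <? weight w) with false by (symmetry; apply Nat.ltb_ge; lia).
    replace (S (weight w) =? weight w) with false by (symmetry; apply Nat.eqb_neq; lia).
    f_equal. f_equal. apply ocw_eval_ext. intros j _ Hj. simpl in Hj.
    replace (j <? weight w) with true by (symmetry; apply Nat.ltb_lt; lia). reflexivity.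
Qed.
Definition Zc {G : Grp} (w : ocw) (B : G -> Prop) (a : G) : Prop :=
  B a /\ forall d, B d -> verbal w B (comm a d).

Definition lprod {G : Grp} (l : list nat) (f : nat -> G) : G :=
  fold_right (fun i acc => gmul (f i) acc) gone l.

Lemma lprod_nil (G : Grp) (f : nat -> G) : lprod nil f = gone.
Proof. reflexivity. Qed.
Lemma lprod_cons (G : Grp) (f : nat -> G) a l : lprod (a :: l) f = gmul (f a) (lprod l f).
Proof. reflexivity. Qed.
Ltac lsimpl := rewrite ?lprod_nil, ?lprod_cons in *.

Lemma cv_refl (G : Grp) w (B : G -> Prop) a : congV w B a a.
Proof. unfold congV. rewrite gmulVr. apply gen_one. Qed.
Lemma cv_eq (G : Grp) w (B : G -> Prop) a b : a = b -> congV w B a b.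
Proof. intros ->; apply cv_refl. Qed.
Lemma cv_sym (G : Grp) w (B : G -> Prop) a b : congV w B a b -> congV w B b a.
Proof. unfold congV. intro H. apply gen_inv in H. gsimpl. exact H. Qed.
Lemma cv_trans (G : Grp) w (B : G -> Prop) a b c : congV w B a b -> congV w B b c -> congV w B a c.
Proof. unfold congV. intros H1 H2. pose proof (gen_mul H1 H2). gsimpl. exact H. Qed.


Lemma cv_mul (G : Grp) w (B : G -> Prop) (HB : is_subgroup B) a a' b b' :
  B a -> congV w B a a' -> congV w B b b' -> congV w B (gmul a b) (gmul a' b').
Proof. unfold congV. intros Ha H1 H2.
  pose proof (verbal_conj' _ w B HB a _ Ha H2) as H3.
  pose proof (gen_mul H3 H1). gsimpl. exact H. Qed.

Lemma cv_mulN (G : Grp) w (B : G -> Prop) (HB : is_subgroup B) a z :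
  B a -> verbal w B z -> congV w B (gmul a z) a.
Proof. unfold congV. intros Ha Hz. pose proof (verbal_conj' _ w B HB a _ Ha Hz).
  gsimpl. exact H. Qed.

Lemma cv_cancel_r (G : Grp) w (B : G -> Prop) a b c :
  congV w B (gmul a c) (gmul b c) -> congV w B a b.
Proof. unfold congV. gsimpl. auto. Qed.

Lemma Zc_B (G : Grp) w (B : G -> Prop) a : Zc w B a -> B a.
Proof. now intros [H _]. Qed.

Lemma Zc_one (G : Grp) w (B : G -> Prop) (HB : is_subgroup B) : Zc w B gone.
Proof. split. apply HB. intros d _. replace (comm gone d) with (@gone G) by gsolve. apply gen_one. Qed.

Lemma Zc_mul (G : Grp) w (B : G -> Prop) (HB : is_subgroup B) a b :
  Zc w B a -> Zc w B b -> Zc w B (gmul a b).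
Proof. intros [Ha Ha'] [Hb Hb']. pose proof HB as [H1 [HM HI]]. split; auto.
  intros d Hd. rewrite comm_mul_l. apply gen_mul; auto.
  apply verbal_conj; auto. apply Hb'; auto. Qed.

Lemma Zc_comm (G : Grp) w (B : G -> Prop) (HB : is_subgroup B) a b :
  Zc w B a -> B b -> congV w B (gmul a b) (gmul b a).
Proof. intros [Ha Ha'] Hb. pose proof HB as [H1 [HM HI]]. unfold congV.
  pose proof (Ha' _ (HI _ Hb)) as H. apply (verbal_conj' _ w B HB a) in H; auto.
  apply gen_inv in H. gsimpl. exact H. Qed.

Lemma lprod_app (G : Grp) (f : nat -> G) l1 l2 :
  lprod (l1 ++ l2) f = gmul (lprod l1 f) (lprod l2 f).
Proof. induction l1; simpl; lsimpl. now rewrite gmul1l. unfold lprod in *. simpl. rewrite IHl1. apply gmulA. Qed.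

Lemma lprod_map (G : Grp) (f : nat -> G) p l :
  lprod (map p l) f = lprod l (fun i => f (p i)).
Proof. induction l; simpl; lsimpl; auto. unfold lprod in *; simpl. now rewrite IHl. Qed.

Lemma lprod_ext (G : Grp) (f g : nat -> G) l :
  (forall i, In i l -> f i = g i) -> lprod l f = lprod l g.
Proof. induction l; simpl; lsimpl; auto. intros H. unfold lprod in *; simpl. rewrite H, IHl; auto. Qed.

Lemma lprod_B (G : Grp) (B : G -> Prop) (HB : is_subgroup B) (f : nat -> G) l :
  (forall i, In i l -> B (f i)) -> B (lprod l f).
Proof. pose proof HB as [H1 [HM HI]]. induction l; simpl; lsimpl; intros H. auto. apply HM; auto. Qed.

Lemma lprod_Zc (G : Grp) w (B : G -> Prop) (HB : is_subgroup B) (f : nat -> G) l :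
  (forall i, In i l -> Zc w B (f i)) -> Zc w B (lprod l f).
Proof. induction l; simpl; lsimpl; intros H. apply Zc_one; auto. apply Zc_mul; auto. Qed.

Lemma lprod_congr (G : Grp) w (B : G -> Prop) (HB : is_subgroup B) (f g : nat -> G) l :
  (forall i, In i l -> B (f i) /\ congV w B (f i) (g i)) -> congV w B (lprod l f) (lprod l g).
Proof. induction l; simpl; lsimpl; intros H. apply cv_refl.
  destruct (H a (or_introl eq_refl)). apply cv_mul; auto. Qed.

Lemma lprod_perm (G : Grp) w (B : G -> Prop) (HB : is_subgroup B) (f : nat -> G) l l' :
  Permutation l l' -> (forall i, In i l -> Zc w B (f i)) -> congV w B (lprod l f) (lprod l' f).
Proof. intro P; induction P; simpl; lsimpl; intros H.
  - apply cv_refl.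
  - apply cv_mul; [auto | apply Zc_B with w; auto | apply cv_refl | apply IHP; auto].
  - rewrite !gmulA. apply cv_mul; [auto | apply HB; apply Zc_B with w; auto | | apply cv_refl].
    apply Zc_comm; auto. apply Zc_B with w; auto.
  - eapply cv_trans. apply IHP1; auto. apply IHP2. intros i Hi. apply H.
    apply Permutation_in with l'; auto. now apply Permutation_sym.
Qed.

Lemma lprod_split (G : Grp) w (B : G -> Prop) (HB : is_subgroup B) (f g : nat -> G) l :
  (forall i, In i l -> Zc w B (f i) /\ Zc w B (g i)) ->
  congV w B (lprod l (fun i => gmul (f i) (g i))) (gmul (lprod l f) (lprod l g)).
Proof. pose proof HB as [H1 [HM HI]]. induction l; simpl; lsimpl; intros H.
  - apply cv_eq. gsimpl; reflexivity.
  - destruct (H a (or_introl eq_refl)) as [Hf Hg].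
    assert (IH := IHl (fun i Hi => H i (or_intror Hi))).
    assert (BF : B (lprod l f)) by (apply lprod_B; auto; intros; apply Zc_B with w; apply H; auto).
    assert (BG : B (lprod l g)) by (apply lprod_B; auto; intros; apply Zc_B with w; apply H; auto).
    eapply cv_trans. apply cv_mul; [auto | apply HM; apply Zc_B with w; auto | apply cv_refl | exact IH].
    rewrite !mulA'. apply cv_mul; [auto | apply Zc_B with w; auto | apply cv_refl | ].
    rewrite !gmulA. apply cv_mul; [auto | apply HM; auto; apply Zc_B with w; auto | | apply cv_refl].
    apply Zc_comm; auto.
Qed.
Lemma wval_B (G : Grp) w (B : G -> Prop) (HB : is_subgroup B) (y : nat -> G) :
  (forall k, k < weight w -> B (y k)) -> B (wval w y).
Proof. intros Hy. unfold wval. apply ocw_eval_B; auto; intros; apply Hy; lia. Qed.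

Lemma phi_Zc (G : Grp) w (B : G -> Prop) (HB : is_subgroup B) (y : nat -> G) :
  (forall k, k < weight w -> B (y k)) -> forall b, B b -> Zc w B (comm (wval w y) b).
Proof. intros Hy b Hb. split. apply subgroup_comm; auto. apply wval_B; auto.
  intros d Hd. apply vlaw_phi; auto. Qed.

Lemma phi_mul (G : Grp) w (B : G -> Prop) (HB : is_subgroup B) (y : nat -> G) :
  (forall k, k < weight w -> B (y k)) -> forall b d, B b -> B d ->
  congV w B (comm (wval w y) (gmul b d)) (gmul (comm (wval w y) b) (comm (wval w y) d)).
Proof. intros Hy b d Hb Hd. set (c := wval w y).
  assert (Zb := phi_Zc _ w B HB y Hy b Hb). assert (Zd := phi_Zc _ w B HB y Hy d Hd).
  fold c in Zb, Zd.
  rewrite comm_mul_r.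
  replace (gmul (gmul (ginv d) (comm c b)) d) with (gmul (comm c b) (comm (comm c b) d)) by gsolve.
  eapply cv_trans. apply cv_mul; [auto | apply (Zc_B _ w); auto | apply cv_refl |].
  apply cv_mulN; auto. apply (Zc_B _ w); auto. apply vlaw_phi; auto.
  apply Zc_comm; auto. apply (Zc_B _ w); auto. Qed.

Lemma lprod_phi (G : Grp) w (B : G -> Prop) (HB : is_subgroup B) (y : nat -> G) :
  (forall k, k < weight w -> B (y k)) -> forall (u : nat -> G) l, (forall i, In i l -> B (u i)) ->
  congV w B (comm (wval w y) (lprod l u)) (lprod l (fun i => comm (wval w y) (u i))).
Proof. intros Hy u l; induction l; lsimpl; intros H.
  - apply cv_eq. gsolve.
  - eapply cv_trans. apply phi_mul; auto. apply H; simpl; auto. apply lprod_B; auto.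
    intros; apply H; simpl; auto.
    apply cv_mul; [auto | | apply cv_refl | apply IHl; intros; apply H; simpl; auto].
    apply subgroup_comm; auto. apply wval_B; auto. apply H; simpl; auto. Qed.

Lemma perm_of_inj (p : nat -> nat) n :
  (forall i, i < n -> p i < n) -> (forall i j, i < n -> j < n -> p i = p j -> i = j) ->
  Permutation (map p (seq 0 n)) (seq 0 n).
Proof. intros Hr Hi. apply NoDup_Permutation_bis.
  - apply NoDup_map_NoDup_ForallPairs. intros a b Ha Hb. apply in_seq in Ha, Hb. apply Hi; lia.
    apply seq_NoDup.
  - rewrite length_map. lia.
  - intros j Hj. apply in_map_iff in Hj. destruct Hj as [i [<- Hi']]. apply in_seq in Hi'.
    apply in_seq. specialize (Hr i). lia.
Qed.
Lemma tau_lprod (G : Grp) w y n (t : nat -> G) sigma x :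
  tau w y n t sigma x = lprod (seq 0 n) (fun i => comm (wval w y) (gmul (gmul (t i) x) (ginv (t (sigma i x))))).
Proof. reflexivity. Qed.

Lemma sig_comp (G : Grp) (B : G -> Prop) (HB : is_subgroup B) n t sigma :
  right_transversal B n t -> coset_action B n t sigma ->
  forall i x1 x2, i < n -> sigma (sigma i x1) x2 = sigma i (gmul x1 x2).
Proof. intros [_ HU] HS i x1 x2 Hi. pose proof HB as [H1 [HM HI]].
  destruct (HS i x1 Hi) as [Hs1 B1]. destruct (HS _ x2 Hs1) as [Hs2 B2].
  destruct (HS i (gmul x1 x2) Hi) as [Hs3 B3].
  apply (HU (gmul (t i) (gmul x1 x2))); auto.
  pose proof (HM _ _ B1 B2). gsimpl. exact H.
Qed.

Lemma sig_inj (G : Grp) (B : G -> Prop) (HB : is_subgroup B) n t sigma :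
  right_transversal B n t -> coset_action B n t sigma ->
  forall i j x, i < n -> j < n -> sigma i x = sigma j x -> i = j.
Proof. intros [_ HU] HS i j x Hi Hj E. pose proof HB as [H1 [HM HI]].
  destruct (HS i x Hi) as [_ B1]. destruct (HS j x Hj) as [_ B2].
  apply (HU (t i)); auto.
  - rewrite gmulVr; auto.
  - rewrite E in B1. pose proof (HM _ _ B1 (HI _ B2)). gsimpl. exact H.
Qed.

Lemma sig_range (G : Grp) (B : G -> Prop) n t sigma :
  coset_action B n t sigma -> forall i x, i < n -> sigma i x < n.
Proof. intros HS i x Hi. apply (HS i x Hi). Qed.

Lemma tau_hom (G : Grp) w (B : G -> Prop) (HB : is_subgroup B) n t sigma y :
  right_transversal B n t -> coset_action B n t sigma ->
  (forall k, k < weight w -> B (y k)) -> forall x1 x2,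
  congV w B (tau w y n t sigma (gmul x1 x2))
            (gmul (tau w y n t sigma x1) (tau w y n t sigma x2)).
Proof. intros HT HS Hy x1 x2. pose proof HB as [H1 [HM HI]]. rewrite !tau_lprod.
  set (c := wval w y).
  assert (Bc : B c) by (apply wval_B; auto).
  set (u := fun x i => gmul (gmul (t i) x) (ginv (t (sigma i x)))).
  assert (Bu : forall x i, i < n -> B (u x i)) by (intros x i Hi; apply (HS i x Hi)).
  assert (Hs : forall i x, i < n -> sigma i x < n) by (intros i x Hi; apply (HS i x Hi)).
  assert (Zu : forall x i, i < n -> Zc w B (comm c (u x i))) by (intros; apply phi_Zc; auto).
  change (congV w B (lprod (seq 0 n) (fun i => comm c (u (gmul x1 x2) i)))
    (gmul (lprod (seq 0 n) (fun i => comm c (u x1 i))) (lprod (seq 0 n) (fun i => comm c (u x2 i))))).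
  rewrite (lprod_ext _ _ (fun i => comm c (gmul (u x1 i) (u x2 (sigma i x1))))).
  2:{ intros i Hi. apply in_seq in Hi. unfold u. rewrite (sig_comp _ B HB n t sigma HT HS); [|lia].
      f_equal. gsolve. }
  eapply cv_trans.
  { apply lprod_congr; auto. intros i Hi. apply in_seq in Hi. split.
    - apply subgroup_comm; auto. apply HM; apply Bu; auto. lia. apply Hs. lia.
    - apply phi_mul; auto; apply Bu; auto. lia. apply Hs; lia. }
  eapply cv_trans.
  { apply lprod_split; auto. intros i Hi. apply in_seq in Hi. split; apply Zu; auto. lia. apply Hs; lia. }
  apply cv_mul; auto.
  { apply lprod_B; auto. intros i Hi. apply in_seq in Hi. apply (Zc_B _ w); apply Zu; lia. }
  { apply cv_refl. }
  rewrite <- (lprod_map _ (fun i => comm c (u x2 i)) (fun i => sigma i x1)).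
  apply lprod_perm; auto.
  - apply perm_of_inj. intros; apply Hs; auto.
    intros i j Hi Hj; apply (sig_inj _ B HB n t sigma HT HS); auto.
  - intros i Hi. apply in_map_iff in Hi. destruct Hi as [j [<- Hj]]. apply in_seq in Hj.
    apply Zu. apply Hs. lia.
Qed.
Lemma tau_indep (G : Grp) w (B : G -> Prop) (HB : is_subgroup B) n t sigma y :
  right_transversal B n t -> coset_action B n t sigma ->
  (forall k, k < weight w -> B (y k)) -> forall t' sigma',
  right_transversal B n t' -> coset_action B n t' sigma' ->
  forall x, congV w B (tau w y n t sigma x) (tau w y n t' sigma' x).
Proof. intros HT HS Hy t' sigma' HT' HS' x. pose proof HB as [H1 [HM HI]]. rewrite !tau_lprod.
  destruct (Nat.eq_dec n 0) as [->|Hn0].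
  { simpl. apply cv_refl. }
  assert (Hn : 0 < n) by lia.
  set (c := wval w y).
  assert (Bc : B c) by (apply wval_B; auto).
  set (pi := fun j => sigma 0 (gmul (ginv (t 0)) (t' j))).
  set (a := fun j => gmul (t' j) (ginv (t (pi j)))).
  set (u := fun i => gmul (gmul (t i) x) (ginv (t (sigma i x)))).
  set (u' := fun i => gmul (gmul (t' i) x) (ginv (t' (sigma' i x)))).
  assert (Hs : forall i x, i < n -> sigma i x < n) by (intros i z Hi; apply (HS i z Hi)).
  assert (Hs' : forall i x, i < n -> sigma' i x < n) by (intros i z Hi; apply (HS' i z Hi)).
  assert (Hpi : forall j, pi j < n) by (intros; apply Hs; auto).
  assert (Ba : forall j, B (a j)).
  { intro j. destruct (HS 0 (gmul (ginv (t 0)) (t' j)) Hn) as [_ Hb]. unfold a, pi.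
    gsimpl. exact Hb. }
  assert (Bu : forall i, i < n -> B (u i)) by (intros i Hi; apply (HS i x Hi)).
  assert (Bu' : forall i, i < n -> B (u' i)) by (intros i Hi; apply (HS' i x Hi)).
  assert (pi_inj : forall i k, i < n -> k < n -> pi i = pi k -> i = k).
  { intros i k Hi Hk E. apply (proj2 HT' (t' i)); auto. rewrite gmulVr; auto.
    pose proof (HM _ _ (Ba i) (HI _ (Ba k))) as H. unfold a in H. rewrite E in H.
    gsimpl. exact H. }
  assert (pi_sig : forall i, i < n -> pi (sigma' i x) = sigma (pi i) x).
  { intros i Hi. apply (proj2 HT (gmul (t (pi i)) x)); auto.
    pose proof (HM _ _ (HM _ _ (HI _ (Ba i)) (Bu' i Hi)) (Ba (sigma' i x))) as H.
    unfold a, u' in H. gsimpl. exact H.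
    pose proof (Bu (pi i) (Hpi i)) as H. unfold u in H. gsimpl. exact H. }
  assert (Hid : forall i, i < n -> gmul (u' i) (a (sigma' i x)) = gmul (a i) (u (pi i))).
  { intros i Hi. unfold u', a, u. rewrite pi_sig; auto. gsolve. }
  assert (Zf : forall b, B b -> Zc w B (comm c b)) by (intros; apply phi_Zc; auto).
  set (L := seq 0 n).
  assert (HL : forall i, In i L -> i < n) by (intros i Hi; apply in_seq in Hi; lia).
  set (T := lprod L (fun i => comm c (u i))).
  set (T' := lprod L (fun i => comm c (u' i))).
  set (A := lprod L (fun i => comm c (a i))).
  assert (ZA : Zc w B A) by (apply lprod_Zc; auto).
  assert (BT : B T) by (apply lprod_B; auto; intros; apply (Zc_B _ w); apply Zf; auto).
  assert (BT' : B T') by (apply lprod_B; auto; intros; apply (Zc_B _ w); apply Zf; auto).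
  change (congV w B T T').
  apply cv_sym. apply cv_cancel_r with A.
  assert (PS : Permutation (map (fun i => sigma' i x) L) L)
    by (apply perm_of_inj; auto; intros; apply (sig_inj _ B HB n t' sigma' HT' HS' i j x); auto).
  assert (PP : Permutation (map pi L) L) by (apply perm_of_inj; auto).
  eapply cv_trans.
  { apply cv_mul with (b' := lprod L (fun i => comm c (a (sigma' i x)))); [auto | auto | apply cv_refl |].
    rewrite <- (lprod_map _ (fun i => comm c (a i)) (fun i => sigma' i x)).
    apply cv_sym. apply lprod_perm; auto. }
  eapply cv_trans.
  { apply cv_sym. apply lprod_split; auto. }
  eapply cv_trans.
  { apply cv_sym. apply (lprod_congr _ w B HB (fun i => comm c (gmul (u' i) (a (sigma' i x))))).
    intros i Hi. split.
    - apply subgroup_comm; auto.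
    - apply phi_mul; auto. }
  rewrite (lprod_ext _ _ (fun i => comm c (gmul (a i) (u (pi i))))).
  2:{ intros i Hi. rewrite Hid; auto. }
  eapply cv_trans.
  { apply lprod_congr; auto. intros i Hi. split.
    - apply subgroup_comm; auto.
    - apply phi_mul; auto. }
  eapply cv_trans.
  { apply lprod_split; auto. }
  eapply cv_trans.
  { apply cv_mul with (b' := T); [auto | apply (Zc_B _ w); auto | apply cv_refl |].
    rewrite <- (lprod_map _ (fun i => comm c (u i)) pi).
    apply lprod_perm; auto. intros i Hi. apply in_map_iff in Hi. destruct Hi as [j [<- Hj]].
    apply Zf; auto. }
  apply Zc_comm; auto.
Qed.
Lemma marg_M1 (G : Grp) w (x : G) (y : nat -> G) : marginal w x ->
  forall e, comm (comm (wval w y) x) e = gone.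
Proof. intros HM e.
  set (g := fun k => if k <? weight w then y k else if k =? weight w then gone else e).
  specialize (HM g (weight w) ltac:(lia)). unfold vlaw, upd in HM.
  rewrite Nat.eqb_refl in HM.
  replace (S (weight w) =? weight w) with false in HM by (symmetry; apply Nat.eqb_neq; lia).
  assert (E1 : wval w (fun k => if k =? weight w then gmul (g (weight w)) x else g k) = wval w y).
  { unfold wval. apply ocw_eval_ext. intros j _ Hj. simpl in Hj.
    replace (j =? weight w) with false by (symmetry; apply Nat.eqb_neq; lia). unfold g.
    replace (j <? weight w) with true by (symmetry; apply Nat.ltb_lt; lia). reflexivity. }
  assert (E2 : wval w g = wval w y).
  { unfold wval. apply ocw_eval_ext. intros j _ Hj. simpl in Hj. unfold g.
    replace (j <? weight w) with true by (symmetry; apply Nat.ltb_lt; lia). reflexivity. }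
  rewrite E1, E2 in HM. unfold g in HM. rewrite Nat.ltb_irrefl, Nat.eqb_refl in HM.
  replace (S (weight w) <? weight w) with false in HM by (symmetry; apply Nat.ltb_ge; lia).
  replace (S (weight w) =? weight w) with false in HM by (symmetry; apply Nat.eqb_neq; lia).
  rewrite gmul1l in HM. rewrite HM. gsolve.
Qed.

Lemma marg_M2 (G : Grp) w (x : G) (y : nat -> G) : marginal w x ->
  forall s, comm (comm (wval w y) s) x = gone.
Proof. intros HM s.
  set (g := fun k => if k <? weight w then y k else if k =? weight w then s else gone).
  specialize (HM g (S (weight w)) ltac:(lia)). unfold vlaw, upd in HM.
  rewrite Nat.eqb_refl in HM.
  replace (weight w =? S (weight w)) with false in HM by (symmetry; apply Nat.eqb_neq; lia).
  assert (E1 : wval w (fun k => if k =? S (weight w) then gmul (g (S (weight w))) x else g k) = wval w y).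
  { unfold wval. apply ocw_eval_ext. intros j _ Hj. simpl in Hj.
    replace (j =? S (weight w)) with false by (symmetry; apply Nat.eqb_neq; lia). unfold g.
    replace (j <? weight w) with true by (symmetry; apply Nat.ltb_lt; lia). reflexivity. }
  assert (E2 : wval w g = wval w y).
  { unfold wval. apply ocw_eval_ext. intros j _ Hj. simpl in Hj. unfold g.
    replace (j <? weight w) with true by (symmetry; apply Nat.ltb_lt; lia). reflexivity. }
  rewrite E1, E2 in HM. unfold g in HM. rewrite Nat.ltb_irrefl, Nat.eqb_refl in HM.
  replace (S (weight w) <? weight w) with false in HM by (symmetry; apply Nat.ltb_ge; lia).
  replace (S (weight w) =? weight w) with false in HM by (symmetry; apply Nat.eqb_neq; lia).
  rewrite gmul1l in HM. rewrite HM. gsolve.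
Qed.

Lemma gpow_add (G : Grp) (k : G) a b : gpow k (a + b) = gmul (gpow k a) (gpow k b).
Proof. induction a; simpl. now rewrite gmul1l. rewrite IHa. apply gmulA. Qed.

Lemma central_pow (G : Grp) (k : G) : (forall e, gmul k e = gmul e k) ->
  forall m e, gmul (gpow k m) e = gmul e (gpow k m).
Proof. intros H m e. symmetry. apply commute_pow. symmetry. apply H. Qed.

Lemma marg_K1 (G : Grp) w (x : G) (y : nat -> G) : marginal w x ->
  forall m, comm (wval w y) (gpow x m) = gpow (comm (wval w y) x) m.
Proof. intros HM. set (c := wval w y). set (k := comm c x).
  assert (Hk : forall e, gmul k e = gmul e k) by (intro e; apply comm_1; apply marg_M1; auto).
  induction m; simpl.
  - gsolve.
  - rewrite comm_mul_r, IHm. fold k. rewrite mulA', Hk, mulKl.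
    apply (central_pow _ k Hk).
Qed.

Lemma marg_K2 (G : Grp) w (x : G) (y : nat -> G) : marginal w x ->
  forall s m, comm (wval w y) (gmul (gmul s (gpow x m)) (ginv s)) = gpow (comm (wval w y) x) m.
Proof. intros HM s m. set (c := wval w y). set (k := comm c x).
  assert (Hk : forall e, gmul k e = gmul e k) by (intro e; apply comm_1; apply marg_M1; auto).
  assert (Hkm := central_pow _ k Hk m).
  set (q := comm c s).
  assert (Hq : comm q (gpow x m) = gone).
  { apply comm_of. apply commute_pow. apply comm_1. apply marg_M2; auto. }
  replace (comm c (gmul (gmul s (gpow x m)) (ginv s)))
    with (gmul (gmul s (comm (gmul c q) (gpow x m))) (ginv s)) by (unfold q; gsolve).
  rewrite comm_mul_l, Hq. unfold c. rewrite (marg_K1 _ w x y HM m). fold c k.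
  rewrite gmul1r, !mulA', (Hkm (gmul q (ginv s))), !mulA', mulKl, mulKr. reflexivity.
Qed.
Fixpoint pit (p : nat -> nat) (m i : nat) : nat :=
  match m with 0 => i | S m' => pit p m' (p i) end.

Fixpoint orb (p : nat -> nat) (i m : nat) : list nat :=
  match m with 0 => nil | S m' => i :: orb p (p i) m' end.

Lemma pit_S (p : nat -> nat) m : forall i, pit p (S m) i = p (pit p m i).
Proof. induction m; intros i; simpl; auto. rewrite <- IHm. reflexivity. Qed.

Lemma pit_add (p : nat -> nat) s : forall d a, pit p (s + d) a = pit p d (pit p s a).
Proof. induction s; intros d a; simpl; auto. Qed.

Lemma pit_range (p : nat -> nat) n : (forall i, i < n -> p i < n) ->
  forall m i, i < n -> pit p m i < n.
Proof. intros Hr m; induction m; intros i Hi; simpl; auto. Qed.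

Lemma pit_inj (p : nat -> nat) n : (forall i, i < n -> p i < n) ->
  (forall i j, i < n -> j < n -> p i = p j -> i = j) ->
  forall m i j, i < n -> j < n -> pit p m i = pit p m j -> i = j.
Proof. intros Hr Hi m; induction m; intros i j Hin Hjn E; simpl in *; auto.
  Qed.

Lemma orb_length (p : nat -> nat) m : forall i, length (orb p i m) = m.
Proof. induction m; intros; simpl; auto. Qed.

Lemma in_orb (p : nat -> nat) m : forall i j, In j (orb p i m) <-> exists s, s < m /\ pit p s i = j.
Proof. induction m; intros i j; simpl.
  - split; [tauto | intros [s [Hs _]]; lia].
  - rewrite IHm. split.
    + intros [<- | [s [Hs E]]]. exists 0; split; auto; lia. exists (S s); split; auto; lia.
    + intros [[|s] [Hs E]]. left; auto. right; exists s; split; auto; lia.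
Qed.

Lemma orb_nodup (p : nat -> nat) m : forall i,
  (forall s1 s2, s1 < s2 < m -> pit p s1 i <> pit p s2 i) -> NoDup (orb p i m).
Proof. induction m; intros i H; simpl. constructor. constructor.
  - rewrite in_orb. intros [s [Hs E]]. apply (H 0 (S s)). lia. simpl. auto.
  - apply IHm. intros s1 s2 Hs. apply (H (S s1) (S s2)). lia.
Qed.

Lemma pigeon (f : nat -> nat) n : (forall j, j <= n -> f j < n) ->
  exists s1 s2, s1 < s2 <= n /\ f s1 = f s2.
Proof. intros Hf. apply NNPP. intro Hn.
  assert (ND : NoDup (map f (seq 0 (S n)))).
  { apply NoDup_map_NoDup_ForallPairs; [|apply seq_NoDup].
    intros a b Ha Hb E. apply in_seq in Ha, Hb.
    destruct (lt_eq_lt_dec a b) as [[L|L]|L]; auto.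
    exfalso; apply Hn; exists a, b; split; auto; lia.
    exfalso; apply Hn; exists b, a; split; auto; lia. }
  apply NoDup_incl_length with (l' := seq 0 n) in ND.
  rewrite length_map, !length_seq in ND. lia.
  intros j Hj. apply in_map_iff in Hj. destruct Hj as [i [<- Hi]]. apply in_seq in Hi.
  apply in_seq. specialize (Hf i). lia.
Qed.

Lemma min_ex (P : nat -> Prop) : (exists m, P m) -> exists m, P m /\ forall m', m' < m -> ~ P m'.
Proof. intros [m Hm]. induction m as [m IH] using (well_founded_induction lt_wf).
  destruct (classic (exists m', m' < m /\ P m')) as [[m' [Hl Hp]]|Hn].
  - apply (IH m'); auto.
  - exists m; split; auto. intros m' Hl Hp. apply Hn; eauto.
Qed.

Lemma orbit_ret (p : nat -> nat) n : (forall i, i < n -> p i < n) ->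
  (forall i j, i < n -> j < n -> p i = p j -> i = j) ->
  forall a, a < n -> exists m, 0 < m /\ pit p m a = a /\ forall d, 0 < d < m -> pit p d a <> a.
Proof. intros Hr Hi a Ha.
  destruct (pigeon (fun j => pit p j a) n) as [s1 [s2 [Hs E]]].
  { intros; apply (pit_range p n); auto. }
  destruct (min_ex (fun m => 0 < m /\ pit p m a = a)) as [m [[Hm1 Hm2] Hmin]].
  { exists (s2 - s1). split. lia.
    apply (pit_inj p n Hr Hi s1); auto. apply (pit_range p n); auto.
    rewrite <- pit_add. replace (s2 - s1 + s1) with s2 by lia. auto. }
  exists m; split; auto; split; auto. intros d Hd E'. apply (Hmin d); [lia | split; [lia | auto]].
Qed.
Lemma orbit_main (G : Grp) w (B : G -> Prop) (HB : is_subgroup B) (c : G) (u : nat -> G)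
  (p : nat -> nat) n (k : G) :
  B c ->
  (forall i, i < n -> p i < n) ->
  (forall i j, i < n -> j < n -> p i = p j -> i = j) ->
  (forall j, j < n -> B (u j)) ->
  (forall j, j < n -> Zc w B (comm c (u j))) ->
  (forall a m, a < n -> pit p m a = a -> comm c (lprod (orb p a m) u) = gpow k m) ->
  (forall l, (forall j, In j l -> j < n) ->
     congV w B (comm c (lprod l u)) (lprod l (fun j => comm c (u j)))) ->
  forall N L, length L <= N -> NoDup L -> (forall j, In j L -> j < n) ->
  (forall j, In j L -> In (p j) L) ->
  congV w B (lprod L (fun j => comm c (u j))) (gpow k (length L)) /\ B (gpow k (length L)).
Proof. intros Bc Hr Hi Bu Zu Horb Hphi N. pose proof HB as [H1 [HM HI]].
  induction N as [|N IH]; intros L HlL ND HLn HLp.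
  { destruct L; simpl in HlL; [|lia]. split. apply cv_refl. exact H1. }
  destruct L as [|a L0].
  { split. apply cv_refl. exact H1. }
  assert (Ha : a < n) by (apply HLn; simpl; auto).
  destruct (orbit_ret p n Hr Hi a Ha) as [m [Hm1 [Hm2 Hmin]]].
  set (L := a :: L0) in *.
  set (O := orb p a m).
  set (R := filter (fun j => if in_dec Nat.eq_dec j O then false else true) L).
  assert (InO : forall j, In j O <-> exists s, s < m /\ pit p s a = j) by (intros; apply in_orb).
  assert (InR : forall j, In j R <-> In j L /\ ~ In j O).
  { intros j. unfold R. rewrite filter_In. destruct (in_dec Nat.eq_dec j O); intuition. }
  assert (OL : forall s, In (pit p s a) L).
  { induction s. simpl; unfold L; simpl; auto. rewrite pit_S. apply HLp; auto. }
  assert (NDO : NoDup O).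
  { apply orb_nodup. intros s1 s2 Hs E. apply (Hmin (s2 - s1)). lia.
    apply (pit_inj p n Hr Hi s1); [apply (pit_range p n); auto | auto |].
    rewrite <- pit_add. replace (s2 - s1 + s1) with s2 by lia. auto. }
  assert (NDR : NoDup R) by (apply NoDup_filter; auto).
  assert (PL : Permutation L (O ++ R)).
  { apply NoDup_Permutation; auto.
    - apply NoDup_app; auto. intros j Hj HjR. apply InR in HjR. tauto.
    - intros j. rewrite in_app_iff, InR. split.
      + intros Hj. destruct (in_dec Nat.eq_dec j O); auto.
      + intros [Hj | [Hj _]]; auto. apply InO in Hj. destruct Hj as [s [_ <-]]. auto. }
  assert (Hlen : length L = m + length R).
  { rewrite (Permutation_length PL), length_app. unfold O. rewrite orb_length. auto. }
  assert (HRc : forall j, In j R -> In (p j) R).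
  { intros j Hj. apply InR in Hj. destruct Hj as [HjL HjO]. apply InR. split. auto.
    intro Hp. apply InO in Hp. destruct Hp as [[|s] [Hs E]].
    - apply HjO. apply InO. exists (m - 1). split. lia.
      apply (Hi _ _ (pit_range p n Hr _ _ Ha) (HLn _ HjL)). rewrite <- pit_S.
      replace (S (m - 1)) with m by lia. rewrite Hm2. simpl in E. auto.
    - apply HjO. apply InO. exists s. split. lia.
      apply (Hi _ _ (pit_range p n Hr _ _ Ha) (HLn _ HjL)). rewrite <- pit_S. auto. }
  destruct (IH R) as [IHc IHb]; [lia | auto | intros j Hj; apply HLn; apply InR; auto | auto | ].
  assert (BO : forall j, In j O -> j < n) by (intros j Hj; apply HLn; apply (Permutation_in _ (Permutation_sym PL)); apply in_app_iff; auto).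
  assert (EO : comm c (lprod O u) = gpow k m) by (apply Horb; auto).
  assert (BkO : B (gpow k m)).
  { rewrite <- EO. apply subgroup_comm; auto. apply lprod_B; auto. }
  rewrite Hlen, gpow_add. split; [|apply HM; auto].
  eapply cv_trans. apply lprod_perm; [auto | exact PL |].
  { intros j Hj. apply Zu. auto. }
  rewrite lprod_app. apply cv_mul; auto.
  - apply lprod_B; auto. intros j Hj. apply (Zc_B _ w). apply Zu; auto.
  - rewrite <- EO. apply cv_sym. apply Hphi; auto.
Qed.
Lemma orb_prod (G : Grp) (t : nat -> G) (sigma : nat -> G -> nat) (x : G) m : forall i,
  lprod (orb (fun j => sigma j x) i m) (fun j => gmul (gmul (t j) x) (ginv (t (sigma j x))))
  = gmul (gmul (t i) (gpow x m)) (ginv (t (pit (fun j => sigma j x) m i))).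
Proof. induction m; intros i; simpl; lsimpl. gsolve. rewrite IHm. gsolve. Qed.

Lemma tau_marg (G : Grp) w (B : G -> Prop) (HB : is_subgroup B) n t sigma y :
  right_transversal B n t -> coset_action B n t sigma ->
  (forall k, k < weight w -> B (y k)) -> forall x, marginal w x ->
  congV w B (tau w y n t sigma x) (comm (wval w y) (gpow x n)).
Proof. intros HT HS Hy x HMx. rewrite tau_lprod, (marg_K1 _ w x y HMx).
  set (c := wval w y). set (k := comm c x).
  assert (Bc : B c) by (apply wval_B; auto).
  set (p := fun j => sigma j x).
  set (u := fun j => gmul (gmul (t j) x) (ginv (t (sigma j x)))).
  assert (Hr : forall i, i < n -> p i < n) by (intros i Hi; apply (HS i x Hi)).
  assert (Hi : forall i j, i < n -> j < n -> p i = p j -> i = j)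
    by (intros i j Hi Hj; apply (sig_inj _ B HB n t sigma HT HS); auto).
  assert (Bu : forall j, j < n -> B (u j)) by (intros j Hj; apply (HS j x Hj)).
  destruct (orbit_main _ w B HB c u p n k Bc Hr Hi Bu) with (N := n) (L := seq 0 n) as [H _].
  - intros; apply phi_Zc; auto.
  - intros a m Ha E. unfold u, p. rewrite orb_prod. fold p. rewrite E. apply marg_K2; auto.
  - intros l Hl. apply lprod_phi; auto.
  - rewrite length_seq; auto.
  - apply seq_NoDup.
  - intros j Hj; apply in_seq in Hj; lia.
  - intros j Hj; apply in_seq in Hj; apply in_seq. specialize (Hr j). lia.
  - rewrite length_seq in H. exact H.
Qed.

Theorem proposition3p4 (w : ocw) (E : Grp) (B : E -> Prop) (n : nat)
  (t : nat -> E) (sigma : nat -> E -> nat) (y : nat -> E) :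
  is_subgroup B ->
  right_transversal B n t ->
  coset_action B n t sigma ->
  (forall k, k < weight w -> B (y k)) ->
  (* tau takes values in B (hence in B/V(B)) *)
  (forall x, B (tau w y n t sigma x)) /\
  (* tau is a homomorphism E -> B/V(B) *)
  (forall x1 x2, congV w B (tau w y n t sigma (gmul x1 x2))
                           (gmul (tau w y n t sigma x1) (tau w y n t sigma x2))) /\
  (* independence of the transversal *)
  (forall (t' : nat -> E) (sigma' : nat -> E -> nat),
     right_transversal B n t' -> coset_action B n t' sigma' ->
     forall x, congV w B (tau w y n t sigma x) (tau w y n t' sigma' x)) /\
  (* value on the marginal subgroup *)
  (forall x, marginal w x ->
     congV w B (tau w y n t sigma x) (comm (wval w y) (gpow x n))).
Proof.
  intros HB HT HS Hy. split; [|split; [|split]].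
  - intros x. rewrite tau_lprod. apply lprod_B; auto. intros i Hi. apply in_seq in Hi.
    apply subgroup_comm; auto. apply wval_B; auto. apply (HS i x). lia.
  - apply tau_hom; auto.
  - intros t' sigma' HT' HS'. apply tau_indep; auto.
  - apply tau_marg; auto.
Qed.
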